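(* If $(G_1,\sigma_1),\dots,(G_k,\sigma_k)$ are signed graphs, then $\chi_s((G_1,\sigma_1)\,\square\cdots\square\,(G_k,\sigma_k))\le\prod_{i=1}^k\chi_s(G_i,\sigma_i)$.
   Context: A signed graph $(G,\sigma)$ is a simple loopless undirected graph with a signature $\sigma:E(G)\to\{+1,-1\}$. Switching a vertex negates the signs of its incident edges; two signatures are equivalent if one is obtained from the other by switching a set of vertices. A homomorphism of $(G,\sigma)$ to $(H,\pi)$ is a graph homomorphism $\varphi:G\to H$ for which there is a signature $\sigma'$ equivalent to $\sigma$ with $\pi(\varphi(u)\varphi(v))=\sigma'(uv)$ for every edge $uv$; $\chi_s(G,\sigma)$ is the smallest order of a signed graph to which $(G,\sigma)$ admits a homomorphism. The Cartesian product $(G,\sigma)\,\square\,(H,\pi)$ is the signed graph on $G\,\square\,H$ where $(u,v_1)(u,v_2)$ has sign $\pi(v_1v_2)$ and $(u_1,v)(u_2,v)$ has sign $\sigma(u_1u_2)$. *)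

(* Defs.v *)
From mathcomp Require Import all_boot.
From Stdlib Require Import ClassicalEpsilon.

Set Implicit Arguments.
Unset Strict Implicit.
Unset Printing Implicit Defensive.

(* A signed graph: a finite simple loopless undirected graph (sadj symmetric,
   irreflexive) together with a signature on its edges.  [ssign u v = true]
   means the edge uv is negative (sign -1), [false] means positive (+1).
   Only the values of ssign on edges are relevant. *)
Record sgraph := SGraph {
  sv :> finType;
  sadj : rel sv;
  ssign : rel sv;
  sadj_sym : symmetric sadj;
  sadj_irr : irreflexive sadj;
  ssign_sym : symmetric ssign
}.

(* Homomorphism (G,sigma) -> (H,pi): a graph homomorphism phi together with a
   switching set S of V(G) such that the switched signature sigma' agrees with
   pi(phi u phi v) on every edge uv. *)
Definition is_shom (G H : sgraph) (phi : G -> H) : Prop :=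
  (forall u v, sadj u v -> sadj (phi u) (phi v)) /\
  exists S : {set G}, forall u v, sadj u v ->
    ssign (phi u) (phi v) = (ssign u v (+) (u \in S) (+) (v \in S)).

Definition shom_exists (G H : sgraph) : Prop := exists phi : G -> H, is_shom phi.

Definition asb (P : Prop) : bool :=
  if excluded_middle_informative P then true else false.

Lemma asbP (P : Prop) : reflect P (asb P).
Proof. by rewrite /asb; case: excluded_middle_informative => h; constructor. Qed.

Definition maps_to_order (G : sgraph) (n : nat) : bool :=
  asb (exists H : sgraph, #|H| = n /\ shom_exists G H).

Lemma maps_to_order_ex (G : sgraph) : exists n, maps_to_order G n.
Proof.
exists #|G|; apply/asbP; exists G; split => //.
exists id; split => // ; by exists set0 => u v _; rewrite !inE !addbF.
Qed.

Definition chi_s (G : sgraph) : nat := ex_minn (maps_to_order_ex G).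

Section Prod.
Variables G H : sgraph.
Definition prod_adj : rel (G * H) := fun x y =>
  ((x.1 == y.1) && sadj x.2 y.2) || ((x.2 == y.2) && sadj x.1 y.1).
Definition prod_sign : rel (G * H) := fun x y =>
  if x.1 == y.1 then ssign x.2 y.2 else ssign x.1 y.1.
Lemma prod_adj_sym : symmetric prod_adj.
Proof. by move=> x y; rewrite /prod_adj (eq_sym x.1) (eq_sym x.2) sadj_sym (sadj_sym x.1). Qed.
Lemma prod_adj_irr : irreflexive prod_adj.
Proof. by move=> x; rewrite /prod_adj !sadj_irr !andbF. Qed.
Lemma prod_sign_sym : symmetric prod_sign.
Proof. by move=> x y; rewrite /prod_sign (eq_sym x.1) ssign_sym (ssign_sym x.1). Qed.
Definition sprod : sgraph :=
  @SGraph (G * H)%type prod_adj prod_sign prod_adj_sym prod_adj_irr prod_sign_sym.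
End Prod.

Definition sprod_list (G1 : sgraph) (Gs : seq sgraph) : sgraph := foldl sprod G1 Gs.

(* Main.v *)
Require Import Defs.
From mathcomp Require Import all_boot.

Lemma chi_s_spec (G : sgraph) : exists H : sgraph, #|H| = chi_s G /\ shom_exists G H.
Proof. by rewrite /chi_s; case: ex_minnP => m /asbP. Qed.

Lemma chi_s_min (G H : sgraph) : shom_exists G H -> chi_s G <= #|H|.
Proof.
move=> h; rewrite /chi_s; case: ex_minnP => m _ ; apply.
by apply/asbP; exists H.
Qed.

Lemma chi_s_prod (G H : sgraph) : chi_s (sprod G H) <= chi_s G * chi_s H.
Proof.
have [G' [cG [phi1 [a1 [S1 s1]]]]] := chi_s_spec G.
have [H' [cH [phi2 [a2 [S2 s2]]]]] := chi_s_spec H.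
rewrite -cG -cH -card_prod.
apply: (@chi_s_min _ (sprod G' H')).
exists (fun x : sprod G H => ((phi1 x.1, phi2 x.2) : sprod G' H')); split.
  case=> [u1 u2] [v1 v2]; rewrite /= /prod_adj /=.
  case/orP=> /andP [/eqP e h].
    by rewrite e eqxx a2.
  by rewrite e eqxx (a1 _ _ h) orbT.
exists [set x : sprod G H | (x.1 \in S1) (+) (x.2 \in S2)].
case=> [u1 u2] [v1 v2]; rewrite /= /prod_adj /prod_sign /= !inE /=.
case: (eqVneq u1 v1) => [->|ne] /=.
  rewrite eqxx sadj_irr andbF orbF /= => h; rewrite s2 //.
  by case: (_ \in S1); case: (u2 \in S2); case: (v2 \in S2); case: (ssign u2 v2).
move=> /andP [/eqP e h].
have -> : (phi1 u1 == phi1 v1) = false.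
  by apply/negbTE; apply/eqP => E; move: (a1 _ _ h); rewrite E sadj_irr.
rewrite s1 // e.
by case: (_ \in S2); case: (u1 \in S1); case: (v1 \in S1); case: (ssign u1 v1).
Qed.

Theorem corollary5p4 (G1 : sgraph) (Gs : seq sgraph) :
  chi_s (sprod_list G1 Gs) <= chi_s G1 * \prod_(G <- Gs) chi_s G.
Proof.
elim: Gs G1 => [|G Gs IH] G1 /=.
  by rewrite big_nil muln1.
rewrite /sprod_list /= big_cons.
apply: leq_trans (IH (sprod G1 G)) _.
by rewrite mulnA leq_mul2r chi_s_prod orbT.
Qed.
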